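(* Let $r \in \mathbb{Q}_{>0}$ be such that $S_r$ is atomic. Then: (1) $S_r$ is a BF-monoid if and only if $r \ge 1$. (2) If $r \in \mathbb{N}$, then $S_r \cong \mathbb{N}_0$, and $\Delta(x) = \emptyset$ and $\mathsf{c}(x) = 0$ for all $x \in S_r \setminus\{0\}$. (3) If $r \notin \mathbb{N}$, then $\Delta(x) = \{|\mathsf{n}(r) - \mathsf{d}(r)|\}$ for every $x \in S_r$ with $|\mathsf{Z}(x)| > 1$; hence $\Delta(S_r) = \{|\mathsf{n}(r) - \mathsf{d}(r)|\}$. (4) If $r \notin \mathbb{N}$, then $\mathsf{Ca}(S_r) = \{\max\{\mathsf{n}(r), \mathsf{d}(r)\}\}$; hence $\mathsf{c}(S_r) = \max\{\mathsf{n}(r), \mathsf{d}(r)\}$.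
   Context: For $q \in \mathbb{Q}_{>0}$, $\mathsf{n}(q),\mathsf{d}(q)$ are the positive coprime integers with $q = \mathsf{n}(q)/\mathsf{d}(q)$. $S_r$ is the additive submonoid of $(\mathbb{Q}_{\ge 0},+)$ generated by $\{r^n : n \in \mathbb{N}_0\}$; it is atomic exactly when $r=1$ or $\mathsf{n}(r)>1$, and for $r \notin \mathbb{N}$ atomic its atoms are the elements $r^n$, $n \in \mathbb{N}_0$. Factorizations of $x$ are elements of the free commutative monoid $\mathsf{Z}(S_r)$ on the atoms mapping to $x$; $\mathsf{Z}(x)$ is their set, $|z|$ the length (number of atoms with multiplicity), $\mathsf{L}(x)$ the set of lengths. $S_r$ is a BF-monoid if $\mathsf{L}(x)$ is finite for all $x$. For $x \ne 0$, $d \in \mathbb{N}$ is a distance of $x$ if $\mathsf{L}(x) \cap \{\ell, \ell+1, \dots, \ell+d\} = \{\ell, \ell+d\}$ for some $\ell \in \mathsf{L}(x)$; $\Delta(x)$ is the set of such $d$ and $\Delta(S_r) = \bigcup_{x \neq 0} \Delta(x)$. For factorizations $z = \sum_a \mu_a a$, $z' = \sum_a \nu_a a$, $\gcd(z,z') = \sum_a \min\{\mu_a,\nu_a\} a$ and $\mathsf{d}(z,z') = \max\{|z| - |\gcd(z,z')|, |z'| - |\gcd(z,z')|\}$. An $N$-chain from $z$ to $z'$ in $\mathsf{Z}(x)$ is a sequence $z=z_0, \dots, z_k = z'$ in $\mathsf{Z}(x)$ with $\mathsf{d}(z_{i-1}, z_i) \le N$. The catenary degree $\mathsf{c}(x)$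 is the least $N \in \mathbb{N}_0 \cup \{\infty\}$ such that any two factorizations of $x$ are connected by an $N$-chain; $\mathsf{c}(S_r) = \sup_x \mathsf{c}(x)$ and $\mathsf{Ca}(S_r) = \{\mathsf{c}(x) : x \in S_r, \mathsf{c}(x) > 0\}$. *)

(* Defs.v *)
From HB Require Import structures.
From mathcomp Require Import all_boot all_order all_algebra.
Set Implicit Arguments. Unset Strict Implicit. Unset Printing Implicit Defensive.
Import Order.TTheory GRing.Theory Num.Theory.
Local Open Scope ring_scope.

Definition inSr (r x : rat) : Prop := exists s : seq nat, x = \sum_(n <- s) r ^+ n.

(* atoms of the reduced monoid S_r (its only unit is 0) *)
Definition is_atom (r a : rat) : Prop :=
  [/\ inSr r a, a != 0 &
      forall b c, inSr r b -> inSr r c -> a = b + c -> b = 0 \/ c = 0].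

Definition atomic (r : rat) : Prop :=
  forall x, inSr r x -> x != 0 ->
    exists s : seq rat, (forall a, a \in s -> is_atom r a) /\ x = \sum_(a <- s) a.

(* A factorization (element of the free commutative monoid on the atoms) is
   represented canonically by the <=-sorted list of its atoms (with multiplicity). *)
Definition is_fact (r x : rat) (z : seq rat) : Prop :=
  [/\ sorted <=%R z, (forall a, a \in z -> is_atom r a) & \sum_(a <- z) a = x].

Definition inL (r x : rat) (l : nat) : Prop := exists z, is_fact r x z /\ size z = l.

(* BF-monoid: L(x) finite (equivalently bounded, being a set of naturals) for all x *)
Definition BF (r : rat) : Prop :=
  forall x, inSr r x -> exists N : nat, forall l, inL r x l -> (l <= N)%N.

Definition in_Delta (r x : rat) (d : nat) : Prop :=
  (0 < d)%N /\ exists l, [/\ inL r x l, inL r x (l + d) &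
                           forall k, (l < k < l + d)%N -> ~ inL r x k].

Definition gcd_size (z z' : seq rat) : nat :=
  \sum_(a <- undup z) minn (count_mem a z) (count_mem a z').

Definition fdist (z z' : seq rat) : nat :=
  maxn (size z - gcd_size z z') (size z' - gcd_size z z').

Definition chain (r x : rat) (N : nat) (z z' : seq rat) : Prop :=
  exists s : seq (seq rat),
    [/\ forall u, u \in s -> is_fact r x u,
        path (fun u v => fdist u v <= N)%N z s & last z s = z'].

Definition catenary_ok (r x : rat) (N : nat) : Prop :=
  forall z z', is_fact r x z -> is_fact r x z' -> chain r x N z z'.

(* c(x) = c, where c : option nat and None stands for infinity *)
Definition cat_deg_is (r x : rat) (c : option nat) : Prop :=
  match c with
  | Some N => catenary_ok r x N /\ forall M, catenary_ok r x M -> (N <= M)%N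
  | None => forall N, ~ catenary_ok r x N
  end.

Definition nr (r : rat) : nat := absz (numq r).
Definition dr (r : rat) : nat := absz (denq r).

(* Main.v *)
Require Import Defs.
From HB Require Import structures.
From mathcomp Require Import all_boot all_order all_algebra.
From mathcomp Require Import zify ring lra.
From Stdlib Require Import Classical.
Set Implicit Arguments. Unset Strict Implicit. Unset Printing Implicit Defensive.
Import Order.TTheory GRing.Theory Num.Theory.

Fixpoint Bh (a b : nat) (cs : seq nat) : nat :=
  match cs with
  | [::] => 0
  | c :: cs' => c * b ^ size cs' + a * Bh a b cs'
  end.

Lemma Bh_rcons a b cs c : Bh a b (rcons cs c) = b * Bh a b cs + c * a ^ size cs.
Proof.
elim: cs => [|x cs IH] /=; first by rewrite !muln0 expn0 !addn0 muln1.
rewrite size_rcons IH expnS.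
set X := (b ^ size cs)%N; set Y := (a ^ size cs)%N; set Z := Bh a b cs. rewrite expnS -/Y; nia.
Qed.

Lemma Bh_rev a b cs : Bh a b (rev cs) = Bh b a cs.
Proof.
elim: cs => [|c cs IH] //=.
by rewrite rev_cons Bh_rcons IH size_rev addnC.
Qed.

Lemma mod_cancel a c x y : coprime a c -> x * c = y * c %[mod a] -> x = y %[mod a].
Proof.
move=> co.
wlog le: x y / (y <= x)%N.
  move=> H; case: (leqP y x) => h; first exact: H.
  by move=> /esym /H -> //; apply: ltnW.
move/eqP; rewrite eqn_mod_dvd ?leq_mul2r ?le ?orbT // -mulnBl.
rewrite mulnC Gauss_dvdr // -eqn_mod_dvd //.
by move/eqP.
Qed.

Lemma Bh_low a b : coprime a b -> (0 < a)%N ->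
  forall cs cs', size cs = size cs' -> Bh a b cs = Bh a b cs' -> cs <> cs' ->
  exists j, [/\ (j < size cs)%N, nth 0%N cs j <> nth 0%N cs' j,
     (forall i, (i < j)%N -> nth 0%N cs i = nth 0%N cs' i) &
     nth 0%N cs j = nth 0%N cs' j %[mod a]].
Proof.
move=> co a0; elim=> [|c cs IH] [|c' cs'] //= [hs] hB hne.
have [ec|nc] := eqVneq c c'.
  subst c'.
  have e2 : Bh a b cs = Bh a b cs'.
    by move: hB; rewrite hs => /addnI /eqP; rewrite eqn_pmul2l // => /eqP.
  have [j [h1 h2 h3 h4]] := IH cs' hs e2 (fun e => hne (congr1 _ e)).
  exists j.+1; split => //.
  by case => [|i] //= /h3.
exists 0%N; split => //; first by move/eqP: nc.
apply: (@mod_cancel _ (b ^ size cs)); first by rewrite coprimeXr.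
move: hB; rewrite hs => hB.
move: hB => /(congr1 (modn^~ a)) /=.
by rewrite ![(_ + a * _)%N]addnC ![(a * _)%N]mulnC !modnMDl.
Qed.

Lemma sum_count (T : eqType) (t z : seq T) : uniq t -> {subset z <= t} ->
  (\sum_(a <- t) count_mem a z)%N = size z.
Proof.
move=> ut; elim: z => [|b z IH] hs /=.
  by rewrite big1.
rewrite big_split /= IH; last by move=> x hx; apply: hs; rewrite inE hx orbT.
rewrite -[(size z).+1]add1n; congr addn.
rewrite (bigD1_seq b) ?hs ?inE ?eqxx //= big1 // => i; rewrite eq_sym => /negPf ->.
by [].
Qed.

Lemma sum_sub (T : eqType) (t z : seq T) (F : T -> nat) : uniq t -> {subset z <= t} ->
  (forall a, a \notin z -> F a = 0%N) ->
  (\sum_(a <- undup z) F a)%N = (\sum_(a <- t) F a)%N.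
Proof.
move=> ut hs hF.
rewrite [RHS](bigID (fun a => a \in z)) /= [X in (_ + X)%N]big1; last by move=> a /hF.
rewrite addn0 -[X in _ = X]big_filter.
have hp : perm_eq (undup z) [seq x <- t | x \in z].
  apply: uniq_perm.
  - exact: undup_uniq.
  - exact: filter_uniq.
  move=> x; rewrite mem_undup mem_filter.
  by case hx: (x \in z) => //=; rewrite hs.
by rewrite (perm_big _ hp).
Qed.

Lemma fdistE (t z z' : seq rat) : uniq t -> {subset z <= t} -> {subset z' <= t} ->
  fdist z z' = maxn (\sum_(a <- t) (count_mem a z - count_mem a z'))%N
                    (\sum_(a <- t) (count_mem a z' - count_mem a z))%N.
Proof.
move=> ut h1 h2.
have hg : gcd_size z z' = (\sum_(a <- t) minn (count_mem a z) (count_mem a z'))%N.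
  apply: sum_sub => // a /count_memPn ->; by rewrite min0n.
rewrite /fdist hg -{1}(sum_count ut h1) -{1}(sum_count ut h2) -!sumnB.
- congr maxn; apply: eq_bigr => a _; lia.
- by move=> a _; apply: geq_minr.
- by move=> a _; apply: geq_minl.
Qed.

Lemma ch_refl r x N z : chain r x N z z.
Proof. by exists [::]. Qed.

Lemma ch_cons r x N z u z' : (fdist z u <= N)%N -> is_fact r x u ->
  chain r x N u z' -> chain r x N z z'.
Proof.
move=> h1 h2 [s [hs hp hl]]; exists (u :: s); split => //=.
- by move=> v; rewrite inE => /orP [/eqP ->|]; [|apply: hs].
- by rewrite h1.
Qed.

Lemma ch_trans r x N z u z' : chain r x N z u -> chain r x N u z' -> chain r x N z z'.
Proof.
move=> [s [hs hp hl]] [s' [hs' hp' hl']]; exists (s ++ s'); split.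
- by move=> v; rewrite mem_cat => /orP [/hs|/hs'].
- by rewrite cat_path hp hl hp'.
- by rewrite last_cat hl.
Qed.

Lemma ch_rcons r x N z u v : chain r x N z u -> (fdist u v <= N)%N -> is_fact r x v ->
  chain r x N z v.
Proof.
move=> h1 h2 h3; apply: ch_trans h1 _; apply: ch_cons h2 h3 _; exact: ch_refl.
Qed.

Lemma ch_distinct r x N z z' : is_fact r x z -> chain r x N z z' -> z <> z' ->
  exists u v, [/\ is_fact r x u, is_fact r x v, u <> v & (fdist u v <= N)%N].
Proof.
move=> hz [s [hs hp hl]]; elim: s z hz hs hp hl => [|u s IH] z hz /=; first by move=> _ _ ->.
move=> hs /andP [h1 h2] hl hne.
have hu : is_fact r x u by apply: hs; rewrite inE eqxx.
have [e|ne] := eqVneq z u.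
  rewrite -e in h2 hl; apply: (IH z hz) h2 hl hne.
  by move=> v hv; apply: hs; rewrite inE hv orbT.
by exists z, u; split => //; apply/eqP.
Qed.

Section S.
Local Open Scope ring_scope.
Variables (r : rat) (n d : nat).
Hypotheses (hn : (1 < n)%N) (hd : (1 < d)%N) (co : coprime n d)
  (hrd : r * d%:R = n%:R).
Local Open Scope ring_scope.

Definition vl (s : seq nat) : rat := \sum_(k <- s) r ^+ k.

Lemma d_neq0 : (d%:R : rat) != 0.
Proof. by rewrite pnatr_eq0 -lt0n ltnW. Qed.

Lemma r_gt0 : 0 < r.
Proof.
have : 0 < r * d%:R by rewrite hrd ltr0n ltnW.
by rewrite pmulr_lgt0 // ltr0n ltnW.
Qed.

Lemma n_neq_d : n != d.
Proof.
apply/eqP=> e; move: co; rewrite e /coprime gcdnn => /eqP h.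
by move: hd; rewrite h.
Qed.

Lemma r_neq1 : r != 1.
Proof.
apply/eqP=> e; move: hrd; rewrite e mul1r => /eqP; rewrite eqr_nat eq_sym.
by rewrite (negPf n_neq_d).
Qed.

Lemma pw_inj : injective (fun k => r ^+ k).
Proof. exact: ieexprIn r_gt0 r_neq1. Qed.

Lemma Bh_val cs : (Bh n d cs)%:R * d%:R =
  (\sum_(i < size cs) (nth 0%N cs i)%:R * r ^+ i) * d%:R ^+ size cs.
Proof.
elim: cs => [|c cs IH] /=; first by rewrite big_ord0 !mul0r.
rewrite big_ord_recl /= expr0 mulr1.
have -> : \sum_(i < size cs) (nth 0%N cs (0 + i))%:R * r ^+ (bump 0 i) =
  r * \sum_(i < size cs) (nth 0%N cs i)%:R * r ^+ i.
  rewrite mulr_sumr; apply: eq_bigr => i _.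
  by rewrite /bump /= add1n exprS mulrCA.
rewrite natrD !natrM natrX -hrd.
set B := (Bh n d cs)%:R in IH *; set S := \sum_(i < _) _ in IH *.
set D := (d%:R : rat) in IH *.
apply/eqP; rewrite -subr_eq0.
have -> : (c%:R * D ^+ size cs + r * D * B) * D - (c%:R + r * S) * D ^+ (size cs).+1
  = r * D * (B * D - S * D ^+ size cs) by rewrite exprS; ring.
by rewrite IH subrr mulr0.
Qed.

Lemma vl_ord (s : seq nat) L : (forall k, k \in s -> k < L)%N ->
  vl s = \sum_(i < L) (count_mem (i : nat) s)%:R * r ^+ i.
Proof.
elim: s => [|k s IH] hs.
  by rewrite /vl big_nil big1 // => i _; rewrite mul0r.
rewrite /vl big_cons -/(vl s) IH; last by move=> x hx; apply: hs; rewrite inE hx orbT.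
have hk : (k < L)%N by apply: hs; rewrite inE eqxx.
rewrite (bigD1 (Ordinal hk)) //= [in RHS](bigD1 (Ordinal hk)) //= eqxx.
rewrite natrD mulrDl -addrA mul1r; congr (_ + _)%R.
congr (_ + _)%R; apply: eq_bigr => i hi.
have : (k == i) = false.
  by apply/negbTE; move: hi; apply: contra => /eqP e; apply/eqP/val_inj.
by move=> ->; rewrite add0n.
Qed.


Lemma perm_cnt (T : eqType) (s s' : seq T) :
  (forall k, count_mem k s = count_mem k s') -> perm_eq s s'.
Proof. by move=> h; apply/allP => x _ /=; apply/eqP. Qed.

Lemma congr_gap a x y : x = y %[mod a] -> x <> y -> (y + a <= x)%N \/ (x + a <= y)%N.
Proof.
wlog le: x y / (y <= x)%N.
  move=> H h1 h2; case: (leqP y x) => h; first exact: H.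
  by case: (H y x (ltnW h) (esym h1) (nesym h2)); [right|left].
move/eqP; rewrite eqn_mod_dvd // => hdv ne; left.
have : (0 < x - y)%N by rewrite subn_gt0 ltn_neqAle le andbT; apply/eqP/nesym.
move=> /(dvdn_leq) /(_ hdv); lia.
Qed.

Lemma lemD (s s' : seq nat) : vl s = vl s' -> ~~ perm_eq s s' ->
  exists j M, [/\ (j < M)%N, count_mem j s <> count_mem j s',
    count_mem j s = count_mem j s' %[mod n], count_mem M s <> count_mem M s'
    & count_mem M s = count_mem M s' %[mod d]].
Proof.
move=> hv hp.
pose L := (\max_(k <- s ++ s') k).+1.
have hL : forall k, k \in s ++ s' -> (k < L)%N.
  by move=> k hk; rewrite ltnS; apply: (@leq_bigmax_seq _ _ _ (fun k => k)).
have hLs : forall k, k \in s -> (k < L)%N by move=> k hk; apply: hL; rewrite mem_cat hk.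
have hLs' : forall k, k \in s' -> (k < L)%N by move=> k hk; apply: hL; rewrite mem_cat hk orbT.
have out : forall k, (L <= k)%N -> count_mem k s = 0%N /\ count_mem k s' = 0%N.
  move=> k hk; split; apply/count_memPn; apply/negP => /[dup] h.
    by move/hLs; rewrite ltnNge hk.
  by move/hLs'; rewrite ltnNge hk.
pose cs := mkseq (fun i => count_mem i s) L.
pose cs' := mkseq (fun i => count_mem i s') L.
have ecs : forall i, (i < L)%N -> nth 0%N cs i = count_mem i s by move=> i hi; rewrite nth_mkseq.
have ecs' : forall i, (i < L)%N -> nth 0%N cs' i = count_mem i s' by move=> i hi; rewrite nth_mkseq.
have sz : size cs = L by rewrite size_mkseq.
have sz' : size cs' = L by rewrite size_mkseq.
have hvs : vl s = \sum_(i < size cs) (nth 0%N cs i)%:R * r ^+ i.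
  by rewrite (vl_ord hLs) sz; apply: eq_bigr => i _; rewrite ecs.
have hvs' : vl s' = \sum_(i < size cs') (nth 0%N cs' i)%:R * r ^+ i.
  by rewrite (vl_ord hLs') sz'; apply: eq_bigr => i _; rewrite ecs'.
have hB : Bh n d cs = Bh n d cs'.
  apply/eqP; rewrite -(eqr_nat rat); apply/eqP.
  apply: (mulIf d_neq0); rewrite !Bh_val -hvs -hvs' hv sz sz' //.
have hne : cs <> cs'.
  move=> e; move/negP: hp; apply; apply: perm_cnt => k.
  case: (ltnP k L) => hk; first by rewrite -ecs // -ecs' // e.
  by have [-> ->] := out k hk.
have [j [hj1 hj2 hj3 hj4]] := Bh_low co (ltnW hn) (etrans sz (esym sz')) hB hne.
have hrB : Bh d n (rev cs) = Bh d n (rev cs') by rewrite !Bh_rev.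
have hrne : rev cs <> rev cs' by move=> e; apply: hne; rewrite -(revK cs) e revK.
have co' : coprime d n by rewrite coprime_sym.
have szr : size (rev cs) = size (rev cs') by rewrite !size_rev sz sz'.
have [j' [hj1' hj2' hj3' hj4']] := Bh_low co' (ltnW hd) szr hrB hrne.
rewrite size_rev sz in hj1'.
move: hj2' hj3' hj4'; rewrite !nth_rev ?sz ?sz' // => hj2' hj3' hj4'.
set M := (L - j'.+1)%N in hj2' hj4'.
rewrite sz in hj1; rewrite !ecs ?ecs' // in hj2 hj4.
have hM : (M < L)%N by rewrite /M; lia.
rewrite !ecs ?ecs' // in hj2' hj4'.
have up : forall i, (M < i < L)%N -> count_mem i s = count_mem i s'.
  move=> i /andP [h1 h2].
  have := hj3' (L - i.+1)%N; rewrite !nth_rev ?size_rev ?sz ?sz'; try lia.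
  have -> : (L - (L - i.+1).+1)%N = i by lia.
  by rewrite ecs ?ecs' //; apply; lia.
have low : forall i, (i < j)%N -> count_mem i s = count_mem i s'.
  by move=> i hi; rewrite -ecs ?ecs' -?ecs' ?hj3 //; lia.
exists j, M; split => //.
rewrite ltn_neqAle; apply/andP; split.
  apply/eqP => ejm; subst M.
  apply: hj2; move: hv.
  rewrite (vl_ord hLs) (vl_ord hLs') (bigD1 (Ordinal hj1)) //= [in RHS](bigD1 (Ordinal hj1)) //=.
  have -> : \sum_(i < L | i != Ordinal hj1) (count_mem (i : nat) s)%:R * r ^+ i =
            \sum_(i < L | i != Ordinal hj1) (count_mem (i : nat) s')%:R * r ^+ i.
    apply: eq_bigr => i hi.
    have hij : (i : nat) != j by move: hi; apply: contra => /eqP e; apply/eqP/val_inj.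
    case: (ltngtP i j) => h; first by rewrite low.
      by rewrite up // -ejm h ltn_ord.
    by move: hij; rewrite h eqxx.
  move/addIr/(mulIf (expf_neq0 _ (lt0r_neq0 r_gt0))) => /eqP.
  by rewrite eqr_nat => /eqP.
rewrite leqNgt; apply/negP => hmj.
by apply: hj2'; rewrite low.
Qed.


Definition pw (k : nat) : rat := r ^+ k.
Definition fz (s : seq nat) : seq rat := sort <=%R (map pw s).

Lemma perm_fz s : perm_eq (fz s) (map pw s).
Proof. by rewrite /fz perm_sort. Qed.

Lemma fz_perm s s' : perm_eq s s' -> fz s = fz s'.
Proof. by move=> h; apply/perm_sort_leP; apply: perm_map. Qed.

Lemma count_fz s k : count_mem (pw k) (fz s) = count_mem k s.
Proof.
rewrite (permP (perm_fz _)) count_map; apply: eq_count => x /=.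
by rewrite /pw inj_eq //; exact: pw_inj.
Qed.

Lemma fz_permE s s' : fz s = fz s' -> perm_eq s s'.
Proof. by move=> e; apply: perm_cnt => k; rewrite -!count_fz e. Qed.

Lemma size_fz s : size (fz s) = size s.
Proof. by rewrite /fz size_sort size_map. Qed.

Lemma mem_fz s a : a \in fz s -> exists2 k, k \in s & a = pw k.
Proof. by rewrite /fz mem_sort => /mapP. Qed.

Lemma sum_fz s : \sum_(a <- fz s) a = vl s.
Proof. by rewrite (perm_big _ (perm_fz _)) big_map. Qed.

Lemma sorted_fz s : sorted <=%R (fz s).
Proof. by apply: sort_sorted; exact: le_total. Qed.

Lemma fdist_fz (U s s' : seq nat) : uniq U -> {subset s <= U} -> {subset s' <= U} ->
  fdist (fz s) (fz s') = maxn (\sum_(k <- U) (count_mem k s - count_mem k s'))%N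
                    (\sum_(k <- U) (count_mem k s' - count_mem k s))%N.
Proof.
move=> uU h1 h2.
have ut : uniq (map pw U) by rewrite map_inj_uniq //; exact: pw_inj.
rewrite (@fdistE (map pw U)) //; last first.
- by move=> a /mem_fz [k hk ->]; apply: map_f; apply: h2.
- by move=> a /mem_fz [k hk ->]; apply: map_f; apply: h1.
by rewrite !big_map; congr maxn; apply: eq_bigr => k _; rewrite !count_fz.
Qed.


Lemma vl_cat s s' : vl (s ++ s') = vl s + vl s'.
Proof. by rewrite /vl big_cat. Qed.

Lemma vl_perm s s' : perm_eq s s' -> vl s = vl s'.
Proof. by move=> h; rewrite /vl (perm_big _ h). Qed.

Lemma vl_nseq m k : vl (nseq m k) = m%:R * r ^+ k.
Proof.
rewrite /vl big_nseq mulr_natl; elim: m => [|m IH] /=; first by rewrite mulr0n.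
by rewrite IH mulrS.
Qed.

Lemma mv_val k w : vl (nseq n k ++ w) = vl (nseq d k.+1 ++ w).
Proof. by rewrite !vl_cat !vl_nseq exprS mulrA [d%:R * r]mulrC hrd. Qed.

Lemma vl_ge0 s : 0 <= vl s.
Proof. by apply: sumr_ge0 => i _; apply: exprn_ge0; apply: ltW; exact: r_gt0. Qed.

Lemma vl_eq0 s : (vl s == 0) = (s == [::]).
Proof.
case: s => [|k s]; first by rewrite /vl big_nil eqxx.
rewrite /vl big_cons -/(vl s) /=; apply/negbTE.
by rewrite gt_eqF // ltr_pwDl // ?vl_ge0 // exprn_gt0 // r_gt0.
Qed.

Definition canon (s : seq nat) : bool :=
  if (d < n)%N then all (fun k => count_mem k s < n)%N s
  else all (fun k => (k == 0%N) || (count_mem k s < d)%N) s.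

Lemma canon_big s : (d < n)%N -> canon s -> forall k, (count_mem k s < n)%N.
Proof.
rewrite /canon => -> /allP h k.
case: (boolP (k \in s)) => [/h //|/count_memPn ->]; lia.
Qed.

Lemma canon_small s : (n < d)%N -> canon s -> forall k, (0 < k)%N -> (count_mem k s < d)%N.
Proof.
rewrite /canon => hnd; rewrite ltnNge ltnW //= => /allP h k hk.
case: (boolP (k \in s)) => [/h|/count_memPn ->]; last lia.
by rewrite -[k == 0%N]negbK -lt0n hk.
Qed.

Lemma canon_uniq s s' : canon s -> canon s' -> vl s = vl s' -> perm_eq s s'.
Proof.
move=> c1 c2 hv; apply/negPn/negP => hp.
have [j [M [hjM h1 h2 h3 h4]]] := lemD hv hp.
case: (ltngtP d n) => hnd.
- have := canon_big hnd c1 j; have := canon_big hnd c2 j.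
  case: (congr_gap h2 h1); lia.
- have hM : (0 < M)%N by lia.
  have := canon_small hnd c1 hM; have := canon_small hnd c2 hM.
  case: (congr_gap h4 h3); lia.
- by move: n_neq_d; rewrite hnd eqxx.
Qed.

Lemma extract (s : seq nat) k p : (p <= count_mem k s)%N -> exists w, perm_eq s (nseq p k ++ w).
Proof.
elim: p s => [|p IH] s hp; first by exists s.
have hk : k \in s by rewrite -has_pred1 has_count; lia.
have := perm_to_rem hk => hps.
have : (p <= count_mem k (rem k s))%N.
  by move: hp; rewrite (permP hps) /= eqxx; lia.
move=> /IH [w hw]; exists w.
by apply: (perm_trans hps); rewrite /= perm_cons.
Qed.

Definition gap := `|(n%:Z - d%:Z)%R|%N.

Lemma gap_gt0 : (0 < gap)%N.
Proof. rewrite /gap absz_gt0 subr_eq0; apply/negP => /eqP [] /eqP; apply/negP; exact: n_neq_d. Qed.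

Lemma step s : ~~ canon s -> exists x y a b w,
  [/\ x != y, perm_eq s (nseq a x ++ w), vl (nseq b y ++ w) = vl s,
      maxn a b = maxn n d & a = (b + gap)%N /\ (1 < b)%N].
Proof.
rewrite /canon; case: ltnP => hnd /allPn [k hk].
- rewrite -leqNgt => /extract [w hw].
  exists k, k.+1, n, d, w; split => //.
  + by rewrite neq_ltn ltnSn ?orbT.
  + by rewrite -mv_val (vl_perm hw).
  + lia.
  + by rewrite /gap distnEl; [split; lia|apply: ltnW].
- rewrite negb_or -leqNgt => /andP [k0 /extract [w hw]].
  have hnd' : (n < d)%N by rewrite ltn_neqAle hnd n_neq_d.
  case: k k0 hw hk => [|k] // _ hw _.
  exists k.+1, k, d, n, w; split => //.
  + by rewrite neq_ltn ltnSn ?orbT.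
  + by rewrite mv_val (vl_perm hw).
  + lia.
  + by rewrite /gap distnEr; [split; lia|apply: ltnW].
Qed.


Lemma vl1 k : vl [:: k] = pw k.
Proof. by rewrite /vl big_seq1. Qed.

Lemma single s k : vl s = pw k -> size s = 1%N.
Proof.
have [N] := ubnP (size s); elim: N s => // N IH s hs hv.
case: (boolP (canon s)) => hc.
  have c1 : canon [:: k].
    by rewrite /canon; case: ifP => _; rewrite /= eqxx /= ?hn ?hd ?orbT.
  by rewrite (perm_size (canon_uniq hc c1 _)) // vl1.
have [x [y [a [b [w [hxy hp hv1 hmax [ha hb]]]]]]] := step hc.
have hs1 : size (nseq b y ++ w) = 1%N.
  apply: IH; last by rewrite hv1.
  move: hs; rewrite (perm_size hp) !size_cat !size_nseq ha; have := gap_gt0; move: (gap) (size w) => g sw; lia.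
by move: hs1; rewrite size_cat size_nseq; lia.
Qed.

Lemma atom_pw k : is_atom r (pw k).
Proof.
split.
- by exists [:: k]; rewrite big_seq1.
- by rewrite /pw expf_neq0 // lt0r_neq0 // r_gt0.
move=> b c [s1 ->] [s2 ->] h.
have : size (s1 ++ s2) = 1%N by apply: (@single _ k); rewrite vl_cat h.
case: s1 {h} => [|k1 s1]; first by left; rewrite big_nil.
case: s2 => [|k2 s2]; first by right; rewrite big_nil.
by rewrite /= size_cat /=; lia.
Qed.

Lemma atom_inv a : is_atom r a -> exists k, a = pw k.
Proof.
case=> [[s ->] ha hdec].
case: s ha hdec => [|k s]; first by rewrite big_nil eqxx.
move=> _ hdec; exists k.
have h1 : inSr r (r ^+ k) by exists [:: k]; rewrite big_seq1.
have h2 : inSr r (\sum_(i <- s) r ^+ i) by exists s.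
case: (hdec _ _ h1 h2 (big_cons _ _ _ _ _ _)).
- by move=> /eqP; rewrite expf_eq0 (negPf (lt0r_neq0 r_gt0)) andbF.
- by rewrite big_cons => ->; rewrite addr0.
Qed.

Lemma fz_fact s : is_fact r (vl s) (fz s).
Proof.
split; first exact: sorted_fz.
- by move=> a /mem_fz [k _ ->]; apply: atom_pw.
- exact: sum_fz.
Qed.

Lemma fact_fz x z : is_fact r x z -> exists s, z = fz s /\ vl s = x.
Proof.
case=> hso ha hsum.
have [s hs] : exists s, z = map pw s.
  elim: z {hso hsum} ha => [|a z IH] ha; first by exists [::].
  have [k hk] := atom_inv (ha a (mem_head _ _)).
  have [s hs] := IH (fun b hb => ha b (mem_behead (s:=a :: z) hb)).
  by exists (k :: s); rewrite hs hk.
exists s; split.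
  by rewrite /fz -hs sorted_sort //; exact: le_trans.
by rewrite -hsum hs /vl big_map.
Qed.

Lemma inLE x l : inL r x l <-> exists s, vl s = x /\ size s = l.
Proof.
split.
  move=> [z [/fact_fz [s [-> <-]] <-]]; by exists s; rewrite size_fz.
move=> [s [<- <-]]; exists (fz s); split; [exact: fz_fact|exact: size_fz].
Qed.


Lemma sum_ind (U : seq nat) x y a b : uniq U -> x \in U -> x != y ->
  (\sum_(k <- U) ((x == k) * a - (y == k) * b))%N = a.
Proof.
move=> uU hx ne.
have ne' : (y == x) = false by rewrite eq_sym (negPf ne).
rewrite (bigD1_seq x) //= eqxx ne' big1 ?mul0n ?mul1n ?subn0 ?addn0 //.
by move=> k hk; rewrite eq_sym (negPf hk).
Qed.

Lemma mv_dist x y a b w : x != y ->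
  fdist (fz (nseq a x ++ w)) (fz (nseq b y ++ w)) = maxn a b.
Proof.
move=> ne.
pose U := undup (x :: y :: w).
have uU : uniq U by apply: undup_uniq.
have hsub : forall c z, {subset nseq c z ++ w <= U} -> True by [].
rewrite (@fdist_fz U); first last.
- by move=> k; rewrite mem_cat mem_undup !inE => /orP [/nseqP [-> _]|->]; rewrite ?eqxx ?orbT.
- by move=> k; rewrite mem_cat mem_undup !inE => /orP [/nseqP [-> _]|->]; rewrite ?eqxx ?orbT.
- exact: uU.
have e1 : forall k, (count_mem k (nseq a x ++ w) - count_mem k (nseq b y ++ w))%N =
    ((x == k) * a - (y == k) * b)%N by move=> k; rewrite !count_cat !count_nseq subnDr.
have e2 : forall k, (count_mem k (nseq b y ++ w) - count_mem k (nseq a x ++ w))%N =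
    ((y == k) * b - (x == k) * a)%N by move=> k; rewrite !count_cat !count_nseq subnDr.
rewrite (eq_bigr _ (fun k _ => e1 k)) (eq_bigr _ (fun k _ => e2 k)).
rewrite sum_ind // ?sum_ind // 1?eq_sym //.
- by rewrite mem_undup !inE eqxx orbT.
- by rewrite mem_undup !inE eqxx.
Qed.

Lemma dist_lb s s' : vl s = vl s' -> ~~ perm_eq s s' ->
  (maxn n d <= fdist (fz s) (fz s'))%N.
Proof.
move=> hv hp.
have [j [M [hjM h1 h2 h3 h4]]] := lemD hv hp.
pose U := undup (s ++ s').
have uU : uniq U by apply: undup_uniq.
rewrite (@fdist_fz U) //; last 2 first.
- by move=> k hk; rewrite mem_undup mem_cat hk.
- by move=> k hk; rewrite mem_undup mem_cat hk orbT.
have inU : forall i, count_mem i s <> count_mem i s' -> i \in U.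
  move=> i hi; rewrite mem_undup mem_cat; case: (boolP (i \in s)) => //= /count_memPn e1.
  by apply/negPn/negP => /count_memPn e2; apply: hi; rewrite e1 e2.
have term : forall i (F : nat -> nat), i \in U -> (F i <= \sum_(k <- U) F k)%N.
  by move=> i F hi; rewrite (bigD1_seq i) //=; apply: leq_addr.
set P := (\sum_(k <- U) _)%N; set Q := (\sum_(k <- U) _)%N.
have hPn : (n <= P)%N \/ (n <= Q)%N.
  case: (congr_gap h2 h1) => h; [left|right];
    (apply: leq_trans (term j _ (inU j h1)); lia).
have hPd : (d <= P)%N \/ (d <= Q)%N.
  case: (congr_gap h4 h3) => h; [left|right];
    (apply: leq_trans (term M _ (inU M h3)); lia).
rewrite geq_max !leq_max.
by case: hPn => -> ; case: hPd => ->; rewrite ?orbT.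
Qed.


Lemma Red s : exists s0 m, [/\ canon s0, vl s0 = vl s, size s = (size s0 + m * gap)%N,
  (forall m', (m' <= m)%N -> exists s1, vl s1 = vl s /\ size s1 = (size s0 + m' * gap)%N)
  & [/\ canon s \/ (0 < m)%N, chain r (vl s) (maxn n d) (fz s) (fz s0)
      & chain r (vl s) (maxn n d) (fz s0) (fz s)]].
Proof.
have [N] := ubnP (size s); elim: N s => // N IH s hs.
case: (boolP (canon s)) => hc.
  exists s, 0%N; split => //; first by rewrite mul0n addn0.
    by move=> m'; rewrite leqn0 => /eqP ->; exists s; rewrite mul0n addn0.
  by split; [left|apply: ch_refl|apply: ch_refl].
have [x [y [a [b [w [hxy hp hv1 hmax [ha hb]]]]]]] := step hc.
set s1 := nseq b y ++ w in hv1.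
have hsz : size s = (size s1 + gap)%N.
  by rewrite (perm_size hp) !size_cat !size_nseq ha; move: (gap) (size w) => g sw; lia.
have [s0 [m1 [c0 v0 sz0 hm0 [_ ch1 ch2]]]] : exists s0 m, [/\ canon s0, vl s0 = vl s1,
  size s1 = (size s0 + m * gap)%N,
  (forall m', (m' <= m)%N -> exists s2, vl s2 = vl s1 /\ size s2 = (size s0 + m' * gap)%N)
  & [/\ canon s1 \/ (0 < m)%N, chain r (vl s1) (maxn n d) (fz s1) (fz s0)
      & chain r (vl s1) (maxn n d) (fz s0) (fz s1)]].
  apply: IH; move: hs; rewrite hsz; have := gap_gt0; move: (gap) (size s1) => g sw; lia.
rewrite hv1 in v0 hm0 ch1 ch2.
exists s0, m1.+1; split => //.
- by rewrite hsz sz0 mulSn; move: (gap) => g; lia.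
- move=> m'; rewrite leq_eqVlt => /orP [/eqP ->|hm'].
    by exists s; split => //; rewrite hsz sz0 mulSn; move: (gap) => g; lia.
  by apply: hm0.
split; first by right.
- rewrite (fz_perm hp); apply: (@ch_cons _ _ _ _ (fz s1)).
  + by rewrite mv_dist // hmax.
  + by rewrite -hv1; apply: fz_fact.
  + exact: ch1.
- apply: (ch_rcons ch2).
  + by rewrite (fz_perm hp) mv_dist 1?eq_sym // maxnC hmax.
  + exact: fz_fact.
Qed.


Lemma cat_ok x : catenary_ok r x (maxn n d).
Proof.
move=> z z' /fact_fz [s [-> hs]] /fact_fz [s' [-> hs']].
have [s0 [m [c0 v0 _ _ [_ ch1 _]]]] := Red s.
have [s0' [m' [c0' v0' _ _ [_ _ ch2]]]] := Red s'.
have e : fz s0 = fz s0'.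
  by apply: fz_perm; apply: canon_uniq => //; rewrite v0 v0' hs hs'.
rewrite hs in ch1; rewrite hs' -e in ch2.
exact: ch_trans ch1 ch2.
Qed.

Lemma cat_lb x N z z' : is_fact r x z -> is_fact r x z' -> z <> z' ->
  catenary_ok r x N -> (maxn n d <= N)%N.
Proof.
move=> hz hz' ne hok.
have [u [v [hu hv huv hd']]] := ch_distinct hz (hok _ _ hz hz') ne.
move: hu hv huv hd' => /fact_fz [su [-> hsu]] /fact_fz [sv [-> hsv]] huv hd'.
apply: leq_trans hd'; apply: dist_lb; first by rewrite hsu hsv.
by apply/negP => /fz_perm.
Qed.

Lemma cat_uniq x : (forall z z', is_fact r x z -> is_fact r x z' -> z = z') ->
  catenary_ok r x 0.
Proof. by move=> h z z' hz hz'; rewrite (h z z' hz hz'); apply: ch_refl. Qed.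

Lemma len_a x s0 l : canon s0 -> vl s0 = x -> inL r x l -> exists m, l = (size s0 + m * gap)%N.
Proof.
move=> c0 v0 /inLE [s [hs <-]].
have [s1 [m [c1 v1 sz _ _]]] := Red s.
exists m; rewrite sz; congr addn; apply: perm_size; apply: canon_uniq => //.
by rewrite v1 hs.
Qed.

Lemma len_b x s0 m m' : canon s0 -> vl s0 = x -> inL r x (size s0 + m * gap) ->
  (m' <= m)%N -> inL r x (size s0 + m' * gap).
Proof.
move=> c0 v0 /inLE [s [hs hsz]] hm'.
have [s1 [m1 [c1 v1 sz hm1 _]]] := Red s.
have e1 : size s1 = size s0.
  by apply: perm_size; apply: canon_uniq => //; rewrite v1 hs.
have em : m1 = m.
  apply/eqP; rewrite -(eqn_pmul2r gap_gt0); apply/eqP.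
  by move: sz; rewrite hsz e1 => /addnI.
have hle : (m' <= m1)%N by rewrite em.
have [s2 [h1 h2]] := hm1 m' hle.
by apply/inLE; exists s2; rewrite h1 hs h2 e1.
Qed.

Lemma len_c x s0 : vl s0 = x -> inL r x (size s0).
Proof. by move=> v0; apply/inLE; exists s0. Qed.

Lemma delta_main x z z' : is_fact r x z -> is_fact r x z' -> z <> z' ->
  forall dd, in_Delta r x dd <-> dd = gap.
Proof.
move=> hz hz' ne.
have [s [ez vs]] := fact_fz hz.
have [s0 [m [c0 v0 _ _ _]]] := Red s.
rewrite vs in v0.
have ex1 : inL r x (size s0 + 1 * gap).
  have [t [et vt hnp]] : exists t, [/\ is_fact r x (fz t), vl t = x & ~~ perm_eq t s0].
    have [t [et vt]] := fact_fz hz; have [t' [et' vt']] := fact_fz hz'.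
    case: (boolP (perm_eq t s0)) => ht.
      exists t'; split => //; first by rewrite -et'.
      by apply/negP => ht'; apply: ne; rewrite et et' (fz_perm ht) (fz_perm ht').
    by exists t; split => //; rewrite -et.
  have [t0 [mt [ct vt0 szt hmt [hcm _ _]]]] := Red t.
  have e1 : size t0 = size s0 by apply: perm_size; apply: canon_uniq => //; rewrite vt0 vt v0.
  have hmt0 : (0 < mt)%N.
    case: hcm => // hct; exfalso; move/negP: hnp; apply.
    by apply: canon_uniq => //; rewrite vt v0.
  have [s2 [h1 h2]] := hmt 1%N hmt0.
  by apply/inLE; exists s2; rewrite h1 vt h2 e1.
move=> dd; split.
- move=> [dpos [l [hl1 hl2 hl3]]].
  have [m1 e1] := len_a c0 v0 hl1.
  have [m2 e2] := len_a c0 v0 hl2.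
  have g0 := gap_gt0.
  case: (ltngtP m2 m1.+1) => hm.
  + exfalso; have : (m2 * gap <= m1 * gap)%N by apply: leq_mul; [rewrite -ltnS|].
    by move: e1 e2; move: (m2 * gap)%N (m1 * gap)%N => a b; lia.
  + exfalso; apply: (hl3 (size s0 + m1.+1 * gap)%N).
      have : (m1.+1 * gap < m2 * gap)%N by rewrite ltn_pmul2r.
      move: e1 e2; rewrite mulSn; move: (m2 * gap)%N (m1 * gap)%N gap => a b g; lia.
    by apply: (len_b c0 v0 (m := m2)); [rewrite -e2|apply: ltnW].
  + by move: e1 e2; rewrite hm mulSn; move: (m1 * gap)%N gap => a g; lia.
- move=> ->; split; first exact: gap_gt0.
  exists (size s0); split.
  + exact: len_c.
  + by move: ex1; rewrite mul1n.
  + move=> k /andP [h1 h2] /(len_a c0 v0) [mk ek].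
    move: h1 h2; rewrite ek; case: mk {ek} => [|mk]; first by rewrite mul0n addn0 ltnn.
    by rewrite mulSn; move: (mk * gap)%N gap => a g; lia.
Qed.

Lemma notBF : (n < d)%N -> ~ BF r.
Proof.
move=> hnd hbf.
pose x0 := vl (nseq n 0).
have fam : forall j, exists w, vl (nseq n j ++ w) = x0 /\ (j <= size w)%N.
  elim=> [|j [w [hw hj]]]; first by exists [::]; rewrite cats0.
  exists (nseq (d - n) j.+1 ++ w); split.
    rewrite -hw (mv_val j w) catA -nseqD.
    by have -> : (n + (d - n))%N = d by lia.
  by rewrite size_cat size_nseq; have := ltn_sub2r hnd; lia.
have [N hN] := hbf x0 (ex_intro _ (nseq n 0) erefl).
have [w [hw hj]] := fam N.+1.
have := hN (size (nseq n N.+1 ++ w)) (proj2 (inLE _ _) (ex_intro _ _ (conj hw erefl))).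
by rewrite size_cat; lia.
Qed.


Lemma two_facts : [/\ is_fact r (vl (nseq n 0)) (fz (nseq n 0)),
   is_fact r (vl (nseq n 0)) (fz (nseq d 1)) & fz (nseq n 0) <> fz (nseq d 1)].
Proof.
split; first exact: fz_fact.
- have -> : vl (nseq n 0) = vl (nseq d 1) by rewrite -[nseq n 0]cats0 mv_val cats0.
  exact: fz_fact.
- move=> /(congr1 size); rewrite !size_fz !size_nseq => /eqP.
  by rewrite (negPf n_neq_d).
Qed.

Lemma cat_x0 : cat_deg_is r (vl (nseq n 0)) (Some (maxn n d)).
Proof.
have [h1 h2 h3] := two_facts.
split; first exact: cat_ok.
by move=> M hM; apply: (cat_lb h1 h2 h3 hM).
Qed.

Lemma part4b x c : cat_deg_is r x c -> exists N, c = Some N /\ (N <= maxn n d)%N.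
Proof.
case: c => [N|] /=.
  by move=> [_ hmin]; exists N; split => //; apply: hmin; apply: cat_ok.
by move=> h; exfalso; apply: (h (maxn n d)); apply: cat_ok.
Qed.

Lemma part4a c : (exists x, [/\ inSr r x, cat_deg_is r x c & c <> Some 0%N]) <->
  c = Some (maxn n d).
Proof.
split.
  move=> [x [hx hc hne]].
  have [N [eN hN]] := part4b hc; subst c.
  move: hc => /= [hok hmin].
  case: (classic (exists z z', [/\ is_fact r x z, is_fact r x z' & z <> z'])).
    move=> [z [z' [hz hz' ne]]].
    by congr Some; apply/eqP; rewrite eqn_leq hN (cat_lb hz hz' ne hok).
  move=> hno; exfalso; apply: hne; congr Some; apply/eqP; rewrite -leqn0; apply: hmin.
  apply: cat_uniq => z z' hz hz'; apply: NNPP => ne; apply: hno; by exists z, z'.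
move=> ->; exists (vl (nseq n 0)); split.
- by exists (nseq n 0).
- exact: cat_x0.
- move=> [] /eqP; rewrite gtn_eqF //; apply: leq_trans (ltnW hn) (leq_maxl _ _).
Qed.

Lemma part4c : exists x, inSr r x /\ cat_deg_is r x (Some (maxn n d)).
Proof. by exists (vl (nseq n 0)); split; [exists (nseq n 0)|exact: cat_x0]. Qed.

Lemma part3b dd : (exists x, [/\ inSr r x, x != 0 & in_Delta r x dd]) <-> dd = gap.
Proof.
split.
  move=> [x [hx hx0 hD]].
  have hD' := hD; move: hD' => [dpos [l [/inLE [s [hs1 hs2]] /inLE [s' [hs1' hs2']] _]]].
  apply/(delta_main (fz_fact s) _ _ dd).1; rewrite ?hs1 //.
  - by rewrite -hs1'; apply: fz_fact.
  - move=> /(congr1 size); rewrite !size_fz hs2 hs2'; lia.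
move=> ->; exists (vl (nseq n 0)); split.
- by exists (nseq n 0).
- by rewrite vl_eq0; case: (n) hn.
- have [h1 h2 h3] := two_facts; exact/(delta_main h1 h2 h3).
Qed.

End S.
Local Open Scope ring_scope.

Lemma rnd (r : rat) (hr : 0 < r) : r * (dr r)%:R = (nr r)%:R.
Proof.
rewrite /nr /dr.
have h1 : ((`|numq r|%N)%:R : rat) = (numq r)%:~R.
  by rewrite natr_absz gtr0_norm // numq_gt0.
have h2 : ((`|denq r|%N)%:R : rat) = (denq r)%:~R.
  by rewrite natr_absz gtr0_norm // denq_gt0.
by rewrite h1 h2 numqE.
Qed.

Lemma dr_gt0 r : (0 < dr r)%N.
Proof. by rewrite /dr absz_gt0 lt0r_neq0 // denq_gt0. Qed.

Lemma nr_gt0 r : 0 < r -> (0 < nr r)%N.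
Proof. by move=> hr; rewrite /nr absz_gt0 lt0r_neq0 // numq_gt0. Qed.

Lemma atom_pow r a : 0 < r -> is_atom r a -> exists j, a = r ^+ j.
Proof.
move=> hr [[s ->] ha hdec].
case: s ha hdec => [|k s]; first by rewrite big_nil eqxx.
move=> _ hdec; exists k.
have h1 : inSr r (r ^+ k) by exists [:: k]; rewrite big_seq1.
have h2 : inSr r (\sum_(i <- s) r ^+ i) by exists s.
case: (hdec _ _ h1 h2 (big_cons _ _ _ _ _ _)).
- by move=> /eqP; rewrite expf_eq0 (negPf (lt0r_neq0 hr)) andbF.
- by rewrite big_cons => ->; rewrite addr0.
Qed.

Lemma sum_ones (z : seq rat) : \sum_(a <- z) (1 : rat) = (size z)%:R.
Proof.
elim: z => [|a z IH]; first by rewrite big_nil.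
by rewrite big_cons IH /= -add1n natrD.
Qed.

Lemma ge1_BF r : 1 <= r -> BF r.
Proof.
move=> h1 x [s ->].
have x0 : 0 <= \sum_(k <- s) r ^+ k.
  by apply: sumr_ge0 => i _; apply: exprn_ge0; apply: le_trans h1.
exists (Num.Def.archi_bound (\sum_(k <- s) r ^+ k)) => l [z [[_ hat hsum] <-]].
have hb := archi_boundP x0.
have : (size z)%:R <= \sum_(k <- s) r ^+ k.
  rewrite -hsum -sum_ones big_seq_cond [X in _ <= X]big_seq_cond.
  apply: ler_sum => a /andP [ha _].
  have [j ->] := atom_pow (lt_le_trans ltr01 h1) (hat a ha).
  exact: exprn_ege1.
move=> hle; have := le_lt_trans hle hb; rewrite ltr_nat; exact: ltnW.
Qed.

Lemma atomic_n r d : 0 < r -> (1 < d)%N -> r * d%:R = 1 -> ~ atomic r.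
Proof.
move=> hr hd hrd hat.
have x1 : inSr r 1 by exists [:: 0%N]; rewrite big_seq1 expr0.
have [s [hs hsum]] := hat 1 x1 (oner_neq0 _).
case: s hs hsum => [|a s] hs hsum; first by move: hsum; rewrite big_nil => /eqP; rewrite oner_eq0.
have ha := hs a (mem_head _ _).
have [k ek] := atom_pow hr ha.
case: ha => _ _ hdec.
have hb : inSr r (r ^+ k.+1) by exists [:: k.+1]; rewrite big_seq1.
have hc : inSr r (\sum_(i <- nseq d.-1 k.+1) r ^+ i) by exists (nseq d.-1 k.+1).
have e : a = r ^+ k.+1 + \sum_(i <- nseq d.-1 k.+1) r ^+ i.
  rewrite ek big_nseq.
  have -> : forall m, iter m (+%R (r ^+ k.+1)) 0 = r ^+ k.+1 *+ m.
    by elim=> [|m IH] //=; rewrite IH mulrS.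
  rewrite -mulrS prednK ?(ltnW hd) // -mulr_natl exprS mulrA [d%:R * r]mulrC hrd mul1r.
  by [].
have rk : forall j, r ^+ j != 0 by move=> j; rewrite expf_neq0 // lt0r_neq0.
case: (hdec _ _ hb hc e) => /eqP; first by rewrite (negPf (rk _)).
rewrite big_nseq.
have -> : forall m, iter m (+%R (r ^+ k.+1)) 0 = r ^+ k.+1 *+ m.
  by elim=> [|m IH] //=; rewrite IH mulrS.
rewrite mulrn_eq0 (negPf (rk _)) orbF; case: d hd {hrd hc e} => [|[|d']] //.
Qed.

Lemma nonint_d r : 0 < r -> ~ (exists k : nat, r = k%:R) -> (1 < dr r)%N.
Proof.
move=> hr hni; have := dr_gt0 r; rewrite leq_eqVlt => /orP [/eqP e|//].
exfalso; apply: hni; exists (nr r).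
by rewrite -(rnd hr) -e mulr1.
Qed.

Lemma int_case (r : rat) (k : nat) (hk : r = k%:R) (hr : 0 < r) :
  forall a, is_atom r a -> a = 1.
Proof.
move=> a ha; have [j ej] := atom_pow hr ha.
case: j ej => [|j] ej; first by rewrite ej expr0.
have k0 : (0 < k)%N by move: hr; rewrite hk ltr0n.
case: k hk k0 => [|[|k]] hk k0 //; first by rewrite ej hk expr1n.
exfalso; case: ha => _ _ hdec.
set K := (k.+2 ^ j.+1)%N.
have hK : (2 <= K)%N.
  have := expn_gt0 k.+2 j; rewrite /K expnS; move: (k.+2 ^ j)%N => t; nia.
have hb : inSr r 1 by exists [:: 0%N]; rewrite big_seq1 expr0.
have nsum : forall m, \sum_(i <- nseq m 0%N) r ^+ i = m%:R.
  move=> m; rewrite big_nseq expr0.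
  by elim: m => [|m IH] //=; rewrite IH -add1n natrD.
have hc : inSr r (K.-1)%:R by exists (nseq K.-1 0%N); rewrite nsum.
have e : a = 1 + (K.-1)%:R.
  by rewrite ej hk -natrX -/K -{1}(prednK (ltnW hK)) mulrS.
case: (hdec _ _ hb hc e) => /eqP; first by rewrite oner_eq0.
by rewrite pnatr_eq0; case: (K) hK => [|[|]].
Qed.

Lemma fact_ones r x z : (forall a, is_atom r a -> a = 1) -> is_fact r x z ->
  z = nseq (size z) 1 /\ (size z)%:R = x.
Proof.
move=> h1 [_ ha hs]; split.
  by apply/all_pred1P; apply/allP => a /ha /h1 ->; rewrite /= eqxx.
rewrite -hs -(sum_ones z); apply: eq_big_seq => a ha'; by rewrite (h1 _ (ha a ha')).
Qed.

Lemma nsum (r : rat) m : \sum_(i <- nseq m 0%N) r ^+ i = m%:R.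
Proof.
rewrite big_nseq expr0.
by elim: m => [|m IH] //=; rewrite IH -add1n natrD.
Qed.

Unset Implicit Arguments.
Theorem corollary3p4 (r : rat) (hr : 0 < r) (hat : atomic r) :
  (* (1) *)
  (BF r <-> 1 <= r) /\
  (* (2) *)
  ((exists k : nat, r = k%:R) ->
     (exists f : nat -> rat,
        [/\ injective f, f 0%N = 0, (forall a b, f (a + b)%N = f a + f b)
          & forall x, inSr r x <-> exists n, x = f n]) /\
     (forall x, inSr r x -> x != 0 ->
        (forall d, ~ in_Delta r x d) /\ cat_deg_is r x (Some 0%N))) /\
  (* (3) *)
  (~ (exists k : nat, r = k%:R) ->
     (forall x, inSr r x ->
        (exists z z', [/\ is_fact r x z, is_fact r x z' & z <> z']) ->
        forall d, in_Delta r x d <-> d = `|(nr r)%:Z - (dr r)%:Z|%N) /\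
     (forall d, (exists x, [/\ inSr r x, x != 0 & in_Delta r x d]) <->
                d = `|(nr r)%:Z - (dr r)%:Z|%N)) /\
  (* (4) *)
  (~ (exists k : nat, r = k%:R) ->
     (forall c : option nat,
        (exists x, [/\ inSr r x, cat_deg_is r x c & c <> Some 0%N]) <->
        c = Some (maxn (nr r) (dr r))) /\
     ((forall x c, inSr r x -> cat_deg_is r x c ->
         exists N, c = Some N /\ (N <= maxn (nr r) (dr r))%N) /\
      exists x, inSr r x /\ cat_deg_is r x (Some (maxn (nr r) (dr r))))).
Proof.
have NI : ~ (exists k : nat, r = k%:R) -> [/\ (1 < nr r)%N, (1 < dr r)%N,
    coprime (nr r) (dr r) & r * (dr r)%:R = (nr r)%:R].
  move=> hni; have hd := nonint_d hr hni; have hrd := rnd hr.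
  have hn : (1 < nr r)%N.
    have := nr_gt0 hr; rewrite leq_eqVlt => /orP [/eqP e|//].
    by exfalso; apply: (atomic_n hr hd _ hat); rewrite hrd -e.
  by split => //; exact: coprime_num_den.
split.
  split.
    move=> hbf; rewrite leNgt; apply/negP => hlt.
    have hni : ~ exists k : nat, r = k%:R.
      move=> [k ek]; move: hr hlt; rewrite ek ltr0n ltrn1; lia.
    have [hn hd co hrd] := NI hni.
    apply: (notBF hn hd co hrd _ hbf).
    rewrite -(ltr_nat rat) -hrd gtr_pMl // ltr0n; lia.
  exact: ge1_BF.
split.
  move=> [k hk]; split.
    exists (fun m => m%:R); split.
    - by move=> a b /eqP; rewrite eqr_nat => /eqP.
    - by [].
    - by move=> a b; rewrite natrD.
    - move=> x; split.
        move=> [s ->]; exists (\sum_(i <- s) k ^ i)%N; rewrite natr_sum.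
        by apply: eq_bigr => i _; rewrite hk natrX.
      by move=> [m ->]; exists (nseq m 0%N); rewrite nsum.
  move=> x hx hx0.
  have h1 := int_case hk hr.
  have uniqf : forall z z', is_fact r x z -> is_fact r x z' -> z = z'.
    move=> z z' hz hz'.
    have [e1 s1] := fact_ones h1 hz; have [e2 s2] := fact_ones h1 hz'.
    rewrite e1 e2; congr nseq; apply/eqP; rewrite -(eqr_nat rat) s1 s2 //.
  split.
    move=> dd [dpos [l [[z [hz hzl]] [z' [hz' hzl']] _]]].
    by move: hzl; rewrite (uniqf z z' hz hz') hzl'; lia.
  split.
    by move=> z z' hz hz'; rewrite (uniqf z z' hz hz'); apply: ch_refl.
  by move=> M _.
split.
  move=> hni; have [hn hd co hrd] := NI hni; split.
    by move=> x hx [z [z' [hz hz' ne]]] dd; exact: (delta_main hn hd co hrd hz hz' ne dd).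
  by move=> dd; exact: (part3b hn hd co hrd dd).
move=> hni; have [hn hd co hrd] := NI hni; split.
  by move=> c; exact: (part4a hn hd co hrd c).
split.
  by move=> x c _ hc; exact: (part4b hn hd co hrd hc).
exact: (part4c hn hd co hrd).
Qed.
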